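(* Consider the R-model with $f(\tau)=\sqrt\tau$, $g(\tau)=\sqrt\tau\ln\tau$ ($\tau>0$) and $\alpha=a/b$ non-constant. Then $d\chi\wedge d\pi=0$ (with $\chi=\dot p/\dot\rho$, $\pi=p/\rho$) if and only if $\beta=\alpha+\tilde c$ for a constant $\tilde c$ (necessarily $\tilde c\neq0$), where $\beta=a'/b'$. In that case $b(r)=e^{\alpha(r)/\tilde c}$ up to a constant factor, $p=\frac{1}{3\tau^2}$ and $$\rho=\frac{1}{3\tau^2}\frac{(2+\alpha+\ln\tau)(2+\alpha+\tilde c+\ln\tau)}{(\alpha+\ln\tau)(\alpha+\tilde c+\ln\tau)}.$$
   Context: An R-model admitting an orthogonal flat synchronisation is the metric $ds^2=-d\tau^2+(\partial_rY)^2dr^2+Y^2d\Omega^2$ ($d\Omega^2$ the unit 2-sphere metric), with $Y=Z^{2/3}$, $Z(\tau,r)=a(r)f(\tau)+b(r)g(\tau)$, where $f,g$ satisfy $\ddot f/f=\ddot g/g=-\frac34p(\tau)$ and $\dot gf-\dot fg=1$. It is a perfect fluid with $u=\partial_\tau$, $p=-\frac43\ddot f/f$, $\rho=\frac43\frac{\dot Z\,\dot Z'}{Z\,Z'}$ (prime $=\partial_r$, dot $=\partial_\tau$). Functions $a,b$ with $b\neq0$, $b'\neq0$; $\alpha=a/b$, $\beta=a'/b'$. *)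

(* Defs.v *)
From Stdlib Require Import Reals.
From Coquelicot Require Import Coquelicot.
Open Scope R_scope.

Definition fR (t : R) : R := sqrt t.
Definition gR (t : R) : R := sqrt t * ln t.

Definition Zfun (a b : R -> R) (t r : R) : R := a r * fR t + b r * gR t.
Definition Zt (a b : R -> R) (t r : R) : R := Derive (fun t' => Zfun a b t' r) t.
Definition Zr (a b : R -> R) (t r : R) : R := Derive (fun r' => Zfun a b t r') r.
Definition Ztr (a b : R -> R) (t r : R) : R := Derive (fun r' => Zt a b t r') r.

Definition pres (t : R) : R := - (4 / 3) * Derive (Derive fR) t / fR t.
Definition rho (a b : R -> R) (t r : R) : R :=
  4 / 3 * (Zt a b t r * Ztr a b t r) / (Zfun a b t r * Zr a b t r).

Definition piR (a b : R -> R) (t r : R) : R := pres t / rho a b t r.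
Definition chiR (a b : R -> R) (t r : R) : R :=
  Derive pres t / Derive (fun t' => rho a b t' r) t.

(* coefficient of dtau /\ dr in dchi /\ dpi *)
Definition dchi_wedge_dpi (a b : R -> R) (t r : R) : R :=
  Derive (fun t' => chiR a b t' r) t * Derive (fun r' => piR a b t r') r
  - Derive (fun r' => chiR a b t r') r * Derive (fun t' => piR a b t' r) t.

Definition alpha (a b : R -> R) (r : R) : R := a r / b r.
Definition beta (a b : R -> R) (r : R) : R := Derive a r / Derive b r.

Definition inI (r0 r1 : Rbar) (r : R) : Prop := Rbar_lt r0 r /\ Rbar_lt r r1.

(* the open set of spacetime points where chi and pi are defined *)
Definition in_dom (a b : R -> R) (r0 r1 : Rbar) (t r : R) : Prop :=
  0 < t /\ inI r0 r1 r /\ Zfun a b t r <> 0 /\ Zr a b t r <> 0 /\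
  rho a b t r <> 0 /\ Derive (fun t' => rho a b t' r) t <> 0.

(* Main.v *)
Require Import Defs.
From Stdlib Require Import Reals Lra.
From Coquelicot Require Import Coquelicot.
Open Scope R_scope.

Lemma loc_neq (phi : R -> R) x : continuous phi x -> phi x <> 0 ->
  locally x (fun y => phi y <> 0).
Proof.
  intros Hc Hn.
  assert (He : 0 < Rabs (phi x)) by (apply Rabs_pos_lt; auto).
  apply (Hc (fun y => y <> 0)).
  exists (mkposreal _ He). intros y Hy Hy0.
  change (Rabs (y - phi x) < Rabs (phi x)) in Hy.
  rewrite Hy0, Rminus_0_l, Rabs_Ropp in Hy. lra.
Qed.

Lemma loc_pos t : 0 < t -> locally t (fun y => 0 < y).
Proof.
  intros Ht. exists (mkposreal _ Ht). intros y Hy.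
  change (Rabs (y - t) < t) in Hy. apply Rabs_def2 in Hy. lra.
Qed.

Lemma loc_inI r0 r1 r : inI r0 r1 r -> locally r (inI r0 r1).
Proof.
  intros [H0 H1].
  pose proof (open_Rbar_gt' r r0 H0) as A.
  pose proof (open_Rbar_lt' r r1 H1) as B.
  apply (filter_and _ _ A B).
Qed.

Ltac gen_der := repeat match goal with |- context [Derive ?f ?x] => let D := fresh "D" in set (D := Derive f x) in * end.

Lemma sqrt2 t : 0 < t -> sqrt t ^ 2 = t.
Proof. intros; simpl; rewrite Rmult_1_r; apply sqrt_sqrt; lra. Qed.

Lemma Zt_eq (a b : R -> R) (t r : R) : 0 < t -> Zt a b t r = (a r + b r * (ln t + 2)) / (2 * sqrt t).
Proof.
  intros Ht. unfold Zt, Zfun, fR, gR. apply is_derive_unique.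
  auto_derive.
  - repeat split; lra.
  - assert (Hs : 0 < sqrt t) by (apply sqrt_lt_R0; lra).
    field_simplify; [| lra| lra]. rewrite sqrt2 by lra. field; lra.
Qed.

Lemma Zr_eq (a b : R -> R) (t r : R) : ex_derive a r -> ex_derive b r ->
  Zr a b t r = sqrt t * (Derive a r + Derive b r * ln t).
Proof.
  intros Ha Hb. unfold Zr, Zfun, fR, gR. apply is_derive_unique.
  auto_derive; auto. rewrite !Rmult_1_l. change (Derive (fun x => a x) r) with (Derive a r). change (Derive (fun x => b x) r) with (Derive b r). set (A := Derive a r). set (B := Derive b r). ring.
Qed.

Lemma Ztr_eq (a b : R -> R) (t r : R) : 0 < t -> ex_derive a r -> ex_derive b r ->
  Ztr a b t r = (Derive a r + Derive b r * (ln t + 2)) / (2 * sqrt t).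
Proof.
  intros Ht Ha Hb. unfold Ztr.
  rewrite (Derive_ext _ (fun r' => (a r' + b r' * (ln t + 2)) / (2 * sqrt t))).
  2:{ intros; apply Zt_eq; auto. }
  apply is_derive_unique.
  assert (Hs : 0 < sqrt t) by (apply sqrt_lt_R0; lra).
  auto_derive; auto. gen_der. field; lra.
Qed.

Lemma pres_eq t : 0 < t -> pres t = 1 / (3 * t ^ 2).
Proof.
  intros Ht. unfold pres, fR.
  assert (Hs : 0 < sqrt t) by (apply sqrt_lt_R0; lra).
  rewrite (Derive_ext_loc _ (fun y => / (2 * sqrt y))).
  2:{ apply (filter_imp (fun y => 0 < y)). 2: now apply loc_pos.
      intros y Hy. apply is_derive_unique. auto_derive. lra. field.
      apply Rgt_not_eq, sqrt_lt_R0; lra. }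
  rewrite (is_derive_unique _ _ (- / (4 * t * sqrt t))).
  - field_simplify; try lra. rewrite sqrt2 by lra. field. lra.
  - auto_derive. repeat split; lra. field_simplify; try lra. replace (sqrt t ^ 3) with (sqrt t * sqrt t ^ 2) by ring; rewrite sqrt2 by lra; field; lra.
Qed.

Lemma Dpres_eq t : 0 < t -> Derive pres t = - 2 / (3 * t ^ 3).
Proof.
  intros Ht. rewrite (Derive_ext_loc _ (fun y => 1 / (3 * y ^ 2))).
  2:{ apply (filter_imp (fun y => 0 < y)). 2: now apply loc_pos.
      intros y Hy. apply pres_eq; auto. }
  apply is_derive_unique. assert (t*t > 0) by nra. auto_derive. lra. field. lra.
Qed.

Definition R0 (t x y : R) : R :=
  1 / (3 * t ^ 2) * ((ln t + x + 2) / (ln t + x)) * ((ln t + y + 2) / (ln t + y)).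

Lemma rho_eq (a b : R -> R) (t r : R) : 0 < t -> ex_derive a r -> ex_derive b r -> b r <> 0 ->
  Derive b r <> 0 -> rho a b t r = R0 t (alpha a b r) (beta a b r).
Proof.
  intros Ht Ha Hb Hb0 Hb1.
  unfold rho. rewrite Zt_eq, Ztr_eq, Zr_eq; auto.
  unfold Zfun, fR, gR, R0, alpha, beta.
  set (x := a r / b r). set (y := Derive a r / Derive b r).
  assert (Ea : a r = b r * x) by (unfold x; field; auto).
  assert (Eda : @eq R (Derive a r) (Derive b r * y)) by (unfold y; revert Hb1; generalize (Derive a r) (Derive b r); intros; field; auto).
  rewrite Ea, Eda. clearbody x y.
  set (B := b r) in *. set (DB := Derive b r) in *. set (L := ln t).
  assert (Hs : 0 < sqrt t) by (apply sqrt_lt_R0; lra).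
  pose proof (sqrt2 t Ht) as Et. set (s := sqrt t) in *. rewrite <- Et.
  replace (B * x * s + B * (s * L)) with (s * B * (L + x)) by ring.
  replace (s * (DB * y + DB * L)) with (s * DB * (L + y)) by ring.
  unfold Rdiv. rewrite !Rinv_mult.
  set (iu := / (L + x)). set (iv := / (L + y)).
  field. repeat split; lra.
Qed.

Definition Wf u v := u * v + u + v.
Definition Nf u v := Wf u v * (Wf u v + 2).
Definition Xf u v := u ^ 2 * v ^ 2 / Nf u v.
Definition Pf u v := u * v / ((u + 2) * (v + 2)).
Definition Xu u v := 2 * u * v ^ 2 * (Nf u v - u * (Wf u v + 1) * (v + 1)) / (Nf u v) ^ 2.
Definition Xv u v := 2 * u ^ 2 * v * (Nf u v - v * (Wf u v + 1) * (u + 1)) / (Nf u v) ^ 2.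
Definition Pu u v := 2 * v / ((v + 2) * (u + 2) ^ 2).
Definition Pv u v := 2 * u / ((u + 2) * (v + 2) ^ 2).

Lemma Drho_eq0 t x y : 0 < t -> ln t + x <> 0 -> ln t + y <> 0 ->
  is_derive (fun t' => R0 t' x y) t
    (- 2 * Nf (ln t + x) (ln t + y) / (3 * t ^ 3 * (ln t + x) ^ 2 * (ln t + y) ^ 2)).
Proof.
  intros Ht Hx Hy. unfold R0, Nf, Wf.
  assert (t*t > 0) by nra.
  auto_derive.
  - repeat split; auto; lra.
  - field. repeat split; auto; lra.
Qed.

Lemma chain_X (g1 g2 : R -> R) z d1 d2 :
  is_derive g1 z d1 -> is_derive g2 z d2 ->
  Wf (g1 z) (g2 z) <> 0 -> Wf (g1 z) (g2 z) + 2 <> 0 ->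
  is_derive (fun z => Xf (g1 z) (g2 z)) z
    (Xu (g1 z) (g2 z) * d1 + Xv (g1 z) (g2 z) * d2).
Proof.
  intros H1 H2 Hw Hw2. unfold Xf, Xu, Xv, Nf in *. unfold Wf in *.
  auto_derive.
  - repeat split; try (eexists; eauto).
    intro E. apply Rmult_integral in E. tauto.
    change (Derive (fun x => g1 x) z) with (Derive g1 z).
    change (Derive (fun x => g2 x) z) with (Derive g2 z).
    rewrite (is_derive_unique _ _ _ H1), (is_derive_unique _ _ _ H2).
    revert Hw Hw2; generalize (g1 z) (g2 z) d1 d2; intros.
    field. auto.
Qed.

Lemma chain_P (g1 g2 : R -> R) z d1 d2 :
  is_derive g1 z d1 -> is_derive g2 z d2 ->
  g1 z + 2 <> 0 -> g2 z + 2 <> 0 ->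
  is_derive (fun z => Pf (g1 z) (g2 z)) z
    (Pu (g1 z) (g2 z) * d1 + Pv (g1 z) (g2 z) * d2).
Proof.
  intros H1 H2 Hu Hv. unfold Pf, Pu, Pv.
  auto_derive.
  - repeat split; try (eexists; eauto).
    intro E. apply Rmult_integral in E. tauto.
    - change (Derive (fun x => g1 x) z) with (Derive g1 z).
    change (Derive (fun x => g2 x) z) with (Derive g2 z).
    rewrite (is_derive_unique _ _ _ H1), (is_derive_unique _ _ _ H2).
    revert Hu Hv; generalize (g1 z) (g2 z) d1 d2; intros.
    field. auto.
Qed.

Definition good (a b : R -> R) r0 r1 := forall r, inI r0 r1 r ->
  ex_derive a r /\ ex_derive b r /\ ex_derive (Derive a) r /\ ex_derive (Derive b) r /\
  b r <> 0 /\ Derive b r <> 0.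

Lemma Drho_eq (a b : R -> R) r0 r1 t r : good a b r0 r1 -> 0 < t -> inI r0 r1 r ->
  ln t + alpha a b r <> 0 -> ln t + beta a b r <> 0 ->
  Derive (fun t' => rho a b t' r) t =
   - 2 * Nf (ln t + alpha a b r) (ln t + beta a b r) /
     (3 * t ^ 3 * (ln t + alpha a b r) ^ 2 * (ln t + beta a b r) ^ 2).
Proof.
  intros G Ht Hr Hx Hy. destruct (G r Hr) as (Ha & Hb & _ & _ & Hb0 & Hb1).
  rewrite (Derive_ext_loc _ (fun t' => R0 t' (alpha a b r) (beta a b r))).
  - apply is_derive_unique, Drho_eq0; auto.
  - apply (filter_imp (fun y => 0 < y)). 2: now apply loc_pos.
    intros y Hy0. apply rho_eq; auto.
Qed.

Lemma chi_eq (a b : R -> R) r0 r1 t r : good a b r0 r1 -> 0 < t -> inI r0 r1 r ->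
  ln t + alpha a b r <> 0 -> ln t + beta a b r <> 0 ->
  chiR a b t r = Xf (ln t + alpha a b r) (ln t + beta a b r).
Proof.
  intros G Ht Hr Hx Hy. unfold chiR. rewrite Dpres_eq by auto.
  rewrite (Drho_eq a b r0 r1) by auto.
  unfold Xf. revert Hx Hy. generalize (ln t + alpha a b r) (ln t + beta a b r).
  intros u v Hu Hv. destruct (Req_dec (Nf u v) 0) as [E|E].
  - rewrite E. unfold Rdiv. rewrite !Rmult_0_r, Rmult_0_l, !Rinv_0. ring.
  - field. repeat split; auto; nra.
Qed.

Lemma pi_eq (a b : R -> R) r0 r1 t r : good a b r0 r1 -> 0 < t -> inI r0 r1 r ->
  ln t + alpha a b r <> 0 -> ln t + beta a b r <> 0 ->
  piR a b t r = Pf (ln t + alpha a b r) (ln t + beta a b r).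
Proof.
  intros G Ht Hr Hx Hy. destruct (G r Hr) as (Ha & Hb & _ & _ & Hb0 & Hb1).
  unfold piR. rewrite pres_eq, (rho_eq a b) by auto. unfold R0, Pf.
  revert Hx Hy. generalize (ln t + alpha a b r) (ln t + beta a b r).
  intros u v Hu Hv.
  assert (t * t > 0) by nra.
  unfold Rdiv. rewrite !Rinv_mult, !Rinv_inv.
  set (i1 := / (u + 2)). set (i2 := / (v + 2)).
  field. repeat split; auto; lra.
Qed.

Lemma alpha_der (a b : R -> R) r0 r1 r : good a b r0 r1 -> inI r0 r1 r ->
  ex_derive (alpha a b) r.
Proof.
  intros G Hr. destruct (G r Hr) as (Ha & Hb & _ & _ & Hb0 & Hb1).
  unfold alpha. auto_derive. repeat split; auto.
Qed.

Lemma beta_der (a b : R -> R) r0 r1 r : good a b r0 r1 -> inI r0 r1 r ->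
  ex_derive (beta a b) r.
Proof.
  intros G Hr. destruct (G r Hr) as (Ha & Hb & Ha2 & Hb2 & Hb0 & Hb1).
  unfold beta. auto_derive. repeat split; auto.
Qed.

Lemma ln_shift_der t x : 0 < t -> is_derive (fun t' => ln t' + x) t (/ t).
Proof. intros Ht. auto_derive. lra. ring. Qed.

Lemma shift_der (f : R -> R) L r : ex_derive f r ->
  is_derive (fun r' => L + f r') r (Derive f r).
Proof. intros H. auto_derive. auto. change (Derive (fun x => f x) r) with (Derive f r). gen_der. ring. Qed.

Lemma dom_facts (a b : R -> R) r0 r1 t r : good a b r0 r1 -> in_dom a b r0 r1 t r ->
  let u := ln t + alpha a b r in let v := ln t + beta a b r in
  0 < t /\ inI r0 r1 r /\ u <> 0 /\ v <> 0 /\ u + 2 <> 0 /\ v + 2 <> 0 /\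
  Wf u v <> 0 /\ Wf u v + 2 <> 0.
Proof.
  intros G (Ht & Hr & HZ & HZr & Hrho & HDrho) u v.
  destruct (G r Hr) as (Ha & Hb & _ & _ & Hb0 & Hb1).
  assert (Hu : u <> 0).
  { intro Hu. apply HZ. unfold Zfun, fR, gR. unfold u, alpha in Hu.
    replace (a r) with (b r * (a r / b r)) by (field; auto).
    replace (a r / b r) with (- ln t) by lra. ring. }
  assert (Hv : v <> 0).
  { intro Hv. apply HZr. rewrite Zr_eq by auto. unfold v, beta in Hv.
    assert (E : @eq R (Derive a r) (Derive b r * (Derive a r / Derive b r))).
    { revert Hb1; generalize (Derive a r) (Derive b r); intros; field; auto. }
    rewrite E. replace (Derive a r / Derive b r) with (- ln t) by lra. ring. }
  rewrite (rho_eq a b) in Hrho by auto.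
  rewrite (Drho_eq a b r0 r1) in HDrho by auto.
  fold u v in Hrho, HDrho. unfold R0 in Hrho. fold u v in Hrho.
  refine (conj Ht (conj Hr (conj Hu (conj Hv _)))). repeat split.
  - intro E. apply Hrho. rewrite E. unfold Rdiv. ring.
  - intro E. apply Hrho. rewrite E. unfold Rdiv. ring.
  - intro E. apply HDrho. unfold Nf. rewrite E. unfold Rdiv. ring.
  - intro E. apply HDrho. unfold Nf. rewrite E. unfold Rdiv. ring.
Qed.

Lemma cont_ln_shift t x : 0 < t -> continuous (fun t' => ln t' + x) t.
Proof. intros Ht. apply (@ex_derive_continuous R_AbsRing R_NormedModule). auto_derive. lra. Qed.

Lemma wedge_eq (a b : R -> R) r0 r1 t r : good a b r0 r1 -> in_dom a b r0 r1 t r ->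
  let u := ln t + alpha a b r in let v := ln t + beta a b r in
  dchi_wedge_dpi a b t r =
   / t * (Derive (beta a b) r - Derive (alpha a b) r) *
   (Xu u v * Pv u v - Xv u v * Pu u v).
Proof.
  intros G D u v.
  destruct (dom_facts a b r0 r1 t r G D) as (Ht & Hr & Hu & Hv & Hu2 & Hv2 & Hw & Hw2).
  fold u v in Hu, Hv, Hu2, Hv2, Hw, Hw2.
  pose proof (alpha_der a b r0 r1 r G Hr) as Hal.
  pose proof (beta_der a b r0 r1 r G Hr) as Hbe.
  assert (Lt : locally t (fun t' => chiR a b t' r = Xf (ln t' + alpha a b r) (ln t' + beta a b r)
                                /\ piR a b t' r = Pf (ln t' + alpha a b r) (ln t' + beta a b r))).
  { apply (filter_imp (fun t' => (0 < t' /\ ln t' + alpha a b r <> 0) /\ ln t' + beta a b r <> 0)).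
    - intros t' ((H1 & H2) & H3). split.
      + apply (chi_eq a b r0 r1); auto.
      + apply (pi_eq a b r0 r1); auto.
    - apply filter_and; [apply filter_and|].
      + now apply loc_pos.
      + apply (loc_neq (fun t' => ln t' + alpha a b r)); auto. now apply cont_ln_shift.
      + apply (loc_neq (fun t' => ln t' + beta a b r)); auto. now apply cont_ln_shift. }
  assert (Lr : locally r (fun r' => chiR a b t r' = Xf (ln t + alpha a b r') (ln t + beta a b r')
                                /\ piR a b t r' = Pf (ln t + alpha a b r') (ln t + beta a b r'))).
  { apply (filter_imp (fun r' => (inI r0 r1 r' /\ ln t + alpha a b r' <> 0) /\ ln t + beta a b r' <> 0)).
    - intros r' ((H1 & H2) & H3). split.
      + apply (chi_eq a b r0 r1); auto.
      + apply (pi_eq a b r0 r1); auto.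
    - apply filter_and; [apply filter_and|].
      + now apply loc_inI.
      + apply (loc_neq (fun r' => ln t + alpha a b r')); auto.
        apply (@ex_derive_continuous R_AbsRing R_NormedModule). apply (ex_intro _ _ (shift_der _ (ln t) r Hal)).
      + apply (loc_neq (fun r' => ln t + beta a b r')); auto.
        apply (@ex_derive_continuous R_AbsRing R_NormedModule). apply (ex_intro _ _ (shift_der _ (ln t) r Hbe)). }
  assert (E1 : Derive (fun t' => Xf (ln t' + alpha a b r) (ln t' + beta a b r)) t = Xu u v * / t + Xv u v * / t)
    by (apply is_derive_unique; apply (chain_X (fun t' => ln t' + alpha a b r) (fun t' => ln t' + beta a b r)); auto; apply ln_shift_der; auto).
  assert (E2 : Derive (fun t' => Pf (ln t' + alpha a b r) (ln t' + beta a b r)) t = Pu u v * / t + Pv u v * / t)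
    by (apply is_derive_unique; apply (chain_P (fun t' => ln t' + alpha a b r) (fun t' => ln t' + beta a b r)); auto; apply ln_shift_der; auto).
  assert (E3 : Derive (fun r' => Xf (ln t + alpha a b r') (ln t + beta a b r')) r = Xu u v * Derive (alpha a b) r + Xv u v * Derive (beta a b) r)
    by (apply is_derive_unique; apply (chain_X (fun r' => ln t + alpha a b r') (fun r' => ln t + beta a b r')); auto; apply shift_der; auto).
  assert (E4 : Derive (fun r' => Pf (ln t + alpha a b r') (ln t + beta a b r')) r = Pu u v * Derive (alpha a b) r + Pv u v * Derive (beta a b) r)
    by (apply is_derive_unique; apply (chain_P (fun r' => ln t + alpha a b r') (fun r' => ln t + beta a b r')); auto; apply shift_der; auto).
  assert (F1 : Derive (fun t' => chiR a b t' r) t = Xu u v * / t + Xv u v * / t)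
    by (rewrite <- E1; apply Derive_ext_loc; apply (filter_imp _ _ (fun _ H => proj1 H) Lt)).
  assert (F2 : Derive (fun t' => piR a b t' r) t = Pu u v * / t + Pv u v * / t)
    by (rewrite <- E2; apply Derive_ext_loc; apply (filter_imp _ _ (fun _ H => proj2 H) Lt)).
  assert (F3 : Derive (fun r' => chiR a b t r') r = Xu u v * Derive (alpha a b) r + Xv u v * Derive (beta a b) r)
    by (rewrite <- E3; apply Derive_ext_loc; apply (filter_imp _ _ (fun _ H => proj1 H) Lr)).
  assert (F4 : Derive (fun r' => piR a b t r') r = Pu u v * Derive (alpha a b) r + Pv u v * Derive (beta a b) r)
    by (rewrite <- E4; apply Derive_ext_loc; apply (filter_imp _ _ (fun _ H => proj2 H) Lr)).
  unfold dchi_wedge_dpi. rewrite F1, F2, F3, F4.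
  fold u v. gen_der. ring.
Qed.

Lemma J_eq u v : u <> 0 -> v <> 0 -> u + 2 <> 0 -> v + 2 <> 0 -> Wf u v <> 0 -> Wf u v + 2 <> 0 ->
  Xu u v * Pv u v - Xv u v * Pu u v =
  4 * u ^ 2 * v ^ 2 * (v - u) / ((Wf u v) ^ 2 * (Wf u v + 2) * (u + 2) ^ 2 * (v + 2) ^ 2).
Proof.
  intros. unfold Xu, Xv, Pu, Pv, Nf in *. unfold Wf in *. field. repeat split; auto.
Qed.

Lemma inI_between r0 r1 r s x : inI r0 r1 r -> inI r0 r1 s ->
  Rmin r s <= x <= Rmax r s -> inI r0 r1 x.
Proof.
  unfold inI, Rmin, Rmax. intros [A B] [C D] E.
  destruct (Rle_dec r s); destruct r0; destruct r1; simpl in *; split; auto; lra.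
Qed.

Lemma const_on_I (f : R -> R) r0 r1 :
  (forall x, inI r0 r1 x -> is_derive f x 0) ->
  forall r s, inI r0 r1 r -> inI r0 r1 s -> f r = f s.
Proof.
  intros H r s Hr Hs.
  destruct (MVT_gen f r s (fun _ => 0)) as (c & _ & E).
  - intros x Hx. apply H. apply (inI_between r0 r1 r s x); auto. lra.
  - intros x Hx. apply continuity_pt_filterlim.
    apply (@ex_derive_continuous R_AbsRing R_NormedModule).
    exists 0. apply H. apply (inI_between r0 r1 r s x); auto.
  - lra.
Qed.

Lemma alpha_deriv (a b : R -> R) r0 r1 r : good a b r0 r1 -> inI r0 r1 r ->
  is_derive (alpha a b) r (Derive b r * (beta a b r - alpha a b r) / b r).
Proof.
  intros G Hr. destruct (G r Hr) as (Ha & Hb & _ & _ & Hb0 & Hb1).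
  unfold alpha, beta. auto_derive. repeat split; auto.
  change (Derive (fun x => a x) r) with (Derive a r).
  change (Derive (fun x => b x) r) with (Derive b r).
  revert Hb0 Hb1. generalize (Derive a r) (Derive b r) (a r) (b r). intros. field. auto.
Qed.

Lemma nz_mul x y : x <> 0 -> y <> 0 -> x * y <> 0.
Proof. intros; apply Rmult_integral_contrapositive_currified; auto. Qed.

Lemma nz_div x y : x <> 0 -> y <> 0 -> x / y <> 0.
Proof. intros; apply nz_mul; auto; apply Rinv_neq_0_compat; auto. Qed.

Lemma wedge_zero (a b : R -> R) r0 r1 c : good a b r0 r1 ->
  (forall r, inI r0 r1 r -> beta a b r = alpha a b r + c) ->
  forall t r, in_dom a b r0 r1 t r -> dchi_wedge_dpi a b t r = 0.
Proof.
  intros G Hc t r D.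
  rewrite (wedge_eq a b r0 r1 t r G D).
  destruct D as (_ & Hr & _).
  pose proof (alpha_der a b r0 r1 r G Hr) as Hal.
  assert (E : Derive (beta a b) r = Derive (alpha a b) r).
  { transitivity (Derive (fun r' => alpha a b r' + c) r).
    - apply Derive_ext_loc. apply (filter_imp (inI r0 r1)). 2: now apply loc_inI.
      intros; apply Hc; auto.
    - apply is_derive_unique. auto_derive. auto. gen_der. ring. }
  rewrite E. ring.
Qed.

Lemma prod_zero (a b : R -> R) r0 r1 : good a b r0 r1 ->
  (forall t r, in_dom a b r0 r1 t r -> dchi_wedge_dpi a b t r = 0) ->
  forall r, inI r0 r1 r ->
  (Derive (beta a b) r - Derive (alpha a b) r) * (beta a b r - alpha a b r) = 0.
Proof.
  intros G W r Hr.
  destruct (G r Hr) as (Ha & Hb & _ & _ & Hb0 & Hb1).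
  set (x := alpha a b r). set (y := beta a b r).
  set (L := Rabs x + Rabs y + 10).
  set (t := exp L).
  assert (Ht : 0 < t) by apply exp_pos.
  assert (HL : ln t = L) by apply ln_exp.
  assert (Hu : ln t + x >= 10) by (rewrite HL; unfold L; pose proof (Rle_abs (- x)); rewrite Rabs_Ropp in *; pose proof (Rabs_pos y); lra).
  assert (Hv : ln t + y >= 10) by (rewrite HL; unfold L; pose proof (Rle_abs (- y)); rewrite Rabs_Ropp in *; pose proof (Rabs_pos x); lra).
  set (u := ln t + x) in *. set (v := ln t + y) in *.
  assert (Hs : 0 < sqrt t) by (apply sqrt_lt_R0; lra).
  assert (D : in_dom a b r0 r1 t r).
  { unfold in_dom. split; [auto|split; [auto|]].
    split; [|split; [|split]].
    - unfold Zfun, fR, gR.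
      replace (a r * sqrt t + b r * (sqrt t * ln t)) with (sqrt t * b r * u).
      + repeat apply nz_mul; lra || auto.
      + unfold u, x, alpha. field. auto.
    - rewrite Zr_eq by auto.
      replace (sqrt t * (Derive a r + Derive b r * ln t)) with (sqrt t * Derive b r * v).
      + repeat apply nz_mul; lra || auto.
      + unfold v, y, beta. revert Hb1. generalize (Derive a r) (Derive b r). intros. field. auto.
    - rewrite (rho_eq a b) by auto. unfold R0. fold x y u v.
      repeat first [apply nz_mul | apply nz_div | apply Rinv_neq_0_compat]; nra.
    - assert (Hu0 : u <> 0) by (intro; lra). assert (Hv0 : v <> 0) by (intro; lra).
      rewrite (Drho_eq a b r0 r1) by auto. fold x y u v.
      unfold Nf, Wf.
      repeat first [apply nz_mul | apply nz_div | apply Rinv_neq_0_compat]; nra. }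
  pose proof (W t r D) as W0.
  rewrite (wedge_eq a b r0 r1 t r G D) in W0. fold x y u v in W0.
  rewrite J_eq in W0 by (unfold Wf; nra).
  set (d := Derive (beta a b) r - Derive (alpha a b) r) in *.
  replace (y - x) with (v - u) by (unfold u, v; ring).
  set (Den := (Wf u v) ^ 2 * (Wf u v + 2) * (u + 2) ^ 2 * (v + 2) ^ 2) in *.
  assert (HD : Den <> 0) by (unfold Den, Wf; repeat apply nz_mul; nra).
  replace (/ t * d * (4 * u ^ 2 * v ^ 2 * (v - u) / Den))
    with ((/ t * 4 * u ^ 2 * v ^ 2 / Den) * (d * (v - u))) in W0 by (unfold Rdiv; ring).
  apply Rmult_integral in W0. destruct W0 as [W0|W0]; auto.
  exfalso. revert W0.
  repeat first [apply nz_mul | apply nz_div | apply Rinv_neq_0_compat]; auto. all: try (apply Rgt_not_eq; exact Ht). all: try (apply Rgt_not_eq, Rplus_lt_0_compat; apply Rlt_0_1). all: try (intro; nra). all: unfold Wf; intro; nra.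
Qed.

Lemma delta_der (a b : R -> R) r0 r1 r : good a b r0 r1 -> inI r0 r1 r ->
  is_derive (fun r => beta a b r - alpha a b r) r (Derive (beta a b) r - Derive (alpha a b) r).
Proof.
  intros G Hr. pose proof (alpha_der a b r0 r1 r G Hr). pose proof (beta_der a b r0 r1 r G Hr).
  auto_derive. auto. gen_der. ring.
Qed.

Lemma exists_c (a b : R -> R) r0 r1 rs : good a b r0 r1 -> inI r0 r1 rs ->
  (forall r, inI r0 r1 r ->
    (Derive (beta a b) r - Derive (alpha a b) r) * (beta a b r - alpha a b r) = 0) ->
  exists c, forall r, inI r0 r1 r -> beta a b r = alpha a b r + c.
Proof.
  intros G Hrs P.
  set (dl := fun r => beta a b r - alpha a b r).
  assert (Hg : forall r, inI r0 r1 r -> dl r * dl r = dl rs * dl rs).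
  { intros r Hr. apply (const_on_I (fun r => dl r * dl r) r0 r1); auto.
    intros x Hx. pose proof (delta_der a b r0 r1 x G Hx) as H.
    pose proof (P x Hx) as Px.
    replace 0 with ((Derive (beta a b) x - Derive (alpha a b) x) * dl x +
                    dl x * (Derive (beta a b) x - Derive (alpha a b) x))
      by (unfold dl in *; gen_der; nra).
    apply (is_derive_mult dl dl); auto. intros; apply Rmult_comm. }
  destruct (Req_dec (dl rs) 0) as [Z|Z].
  - exists 0. intros r Hr. pose proof (Hg r Hr) as E. rewrite Z, Rmult_0_l in E.
    apply Rmult_integral in E. unfold dl in E. destruct E; lra.
  - exists (dl rs). intros r Hr.
    assert (E : dl r = dl rs).
    { apply (const_on_I dl r0 r1); auto. intros x Hx.
      pose proof (delta_der a b r0 r1 x G Hx) as H.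
      assert (Nx : dl x <> 0).
      { intro E0. pose proof (Hg x Hx) as E1. rewrite E0, Rmult_0_l in E1.
        apply Z. symmetry in E1. apply Rmult_integral in E1. tauto. }
      pose proof (P x Hx) as Px. fold (dl x) in Px.
      apply Rmult_integral in Px. destruct Px as [Px|Px]; [|tauto].
      rewrite Px in H. exact H. }
    unfold dl in *. lra.
Qed.

Lemma c_nonzero (a b : R -> R) r0 r1 c rs ss : good a b r0 r1 ->
  inI r0 r1 rs -> inI r0 r1 ss -> alpha a b rs <> alpha a b ss ->
  (forall r, inI r0 r1 r -> beta a b r = alpha a b r + c) -> c <> 0.
Proof.
  intros G Hr Hs Hn Hc c0. apply Hn.
  apply (const_on_I (alpha a b) r0 r1); auto.
  intros x Hx. pose proof (alpha_deriv a b r0 r1 x G Hx) as H.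
  rewrite (Hc x Hx), c0 in H.
  replace (Derive b x * (alpha a b x + 0 - alpha a b x) / b x) with 0 in H; auto.
  destruct (G x Hx) as (_ & _ & _ & _ & Hb0 & _). field. auto.
Qed.

Lemma b_exp (a b : R -> R) r0 r1 c rs : good a b r0 r1 -> inI r0 r1 rs ->
  (forall r, inI r0 r1 r -> beta a b r = alpha a b r + c) -> c <> 0 ->
  exists K, K <> 0 /\ forall r, inI r0 r1 r -> b r = K * exp (alpha a b r / c).
Proof.
  intros G Hrs Hc c0.
  set (phi := fun r => b r * exp (- (alpha a b r / c))).
  assert (Hphi : forall r, inI r0 r1 r -> phi r = phi rs).
  { intros r Hr. apply (const_on_I phi r0 r1); auto.
    intros x Hx. destruct (G x Hx) as (Ha & Hb & _ & _ & Hb0 & Hb1).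
    pose proof (alpha_deriv a b r0 r1 x G Hx) as H.
    pose proof (Hc x Hx) as Ex.
    unfold phi. auto_derive.
    - repeat split; auto. exists (Derive b x * (beta a b x - alpha a b x) / b x); auto.
    - change (Derive (fun x => b x) x) with (Derive b x).
      change (Derive (fun x0 => alpha a b x0) x) with (Derive (alpha a b) x).
      rewrite (is_derive_unique _ _ _ H). rewrite Ex.
      revert Hb0 Hb1. generalize (Derive b x) (b x) (exp (- (alpha a b x / c))) (alpha a b x).
      intros. field. auto. }
  exists (phi rs). split.
  - unfold phi. destruct (G rs Hrs) as (_ & _ & _ & _ & Hb0 & _).
    apply Rmult_integral_contrapositive_currified; auto. apply Rgt_not_eq, exp_pos.
  - intros r Hr. rewrite <- (Hphi r Hr). unfold phi.
    rewrite Rmult_assoc, <- exp_plus.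
    replace (- (alpha a b r / c) + alpha a b r / c) with 0 by ring.
    rewrite exp_0. ring.
Qed.

Lemma rho_formula (a b : R -> R) r0 r1 c : good a b r0 r1 ->
  (forall r, inI r0 r1 r -> beta a b r = alpha a b r + c) ->
  forall t r, 0 < t -> inI r0 r1 r ->
    alpha a b r + ln t <> 0 -> alpha a b r + c + ln t <> 0 ->
    rho a b t r =
      1 / (3 * t ^ 2) *
      ((2 + alpha a b r + ln t) * (2 + alpha a b r + c + ln t)) /
      ((alpha a b r + ln t) * (alpha a b r + c + ln t)).
Proof.
  intros G Hc t r Ht Hr H1 H2.
  destruct (G r Hr) as (Ha & Hb & _ & _ & Hb0 & Hb1).
  rewrite (rho_eq a b) by auto. rewrite (Hc r Hr). unfold R0.
  revert H1 H2. generalize (alpha a b r) (ln t). intros x L H1 H2.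
  replace (L + x) with (x + L) by ring.
  replace (L + (x + c)) with (x + c + L) by ring.
  replace (x + L + 2) with (2 + x + L) by ring.
  replace (x + c + L + 2) with (2 + x + c + L) by ring.
  assert (t * t > 0) by nra.
  field. repeat split; auto; nra.
Qed.

Theorem mainTheorem9 (a b : R -> R) (r0 r1 : Rbar)
  (Ha : forall (n : nat) (r : R), inI r0 r1 r -> ex_derive_n a n r)
  (Hb : forall (n : nat) (r : R), inI r0 r1 r -> ex_derive_n b n r)
  (Hb0 : forall r, inI r0 r1 r -> b r <> 0)
  (Hb1 : forall r, inI r0 r1 r -> Derive b r <> 0)
  (Hnc : exists r s, inI r0 r1 r /\ inI r0 r1 s /\ alpha a b r <> alpha a b s) :
  ((forall t r, in_dom a b r0 r1 t r -> dchi_wedge_dpi a b t r = 0) <->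
   (exists c : R, forall r, inI r0 r1 r -> beta a b r = alpha a b r + c))
  /\
  (forall c : R, (forall r, inI r0 r1 r -> beta a b r = alpha a b r + c) ->
     c <> 0
     /\ (exists K : R, K <> 0 /\
           forall r, inI r0 r1 r -> b r = K * exp (alpha a b r / c))
     /\ (forall t, 0 < t -> pres t = 1 / (3 * t ^ 2))
     /\ (forall t r, 0 < t -> inI r0 r1 r ->
           alpha a b r + ln t <> 0 -> alpha a b r + c + ln t <> 0 ->
           rho a b t r =
             1 / (3 * t ^ 2) *
             ((2 + alpha a b r + ln t) * (2 + alpha a b r + c + ln t)) /
             ((alpha a b r + ln t) * (alpha a b r + c + ln t)))).
Proof.
  assert (G : good a b r0 r1).
  { intros r Hr. split; [exact (Ha 1%nat r Hr)|]. split; [exact (Hb 1%nat r Hr)|].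
    split; [exact (Ha 2%nat r Hr)|]. split; [exact (Hb 2%nat r Hr)|]. auto. }
  destruct Hnc as (rs & ss & Hrs & Hss & Hn).
  split.
  - split.
    + intros W. apply (exists_c a b r0 r1 rs G Hrs). apply (prod_zero a b r0 r1 G W).
    + intros [c Hc]. apply (wedge_zero a b r0 r1 c G Hc).
  - intros c Hc.
    assert (c0 : c <> 0) by exact (c_nonzero a b r0 r1 c rs ss G Hrs Hss Hn Hc).
    split; [exact c0|]. split; [exact (b_exp a b r0 r1 c rs G Hrs Hc c0)|].
    split; [exact pres_eq|].
    exact (rho_formula a b r0 r1 c G Hc).
Qed.
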